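(* Assume that the mask $\mathbf{M} \in \mathbb{R}^{L \times L}$ supports matrix-vector multiplication (computing $\mathbf{M}\mathbf{x}$ for $\mathbf{x}\in\mathbb{R}^L$) in time $T_{\mathbf{M}}(L)$. Then the general masked kernel attention with mask $\mathbf{M}$, where the kernel is computed through the feature map $\phi:\mathbb{R}^{d_{QK}}\rightarrow\mathbb{R}^{m}$, can be implemented in time $O((T_{\mathbf{M}}(L)+L)md)$.
   Context: Let $L$ be the number of input tokens, with query and key matrices $\mathbf{Q},\mathbf{K}\in\mathbb{R}^{L\times d_{QK}}$ and value matrix $\mathbf{V}\in\mathbb{R}^{L\times d}$. The general masked kernel attention with mask $\mathbf{M}\in\mathbb{R}^{L\times L}$ is $\mathrm{Att}_{\mathrm{K}}(\mathbf{Q},\mathbf{K},\mathbf{V},\mathbf{M})=\mathbf{D}^{-1}\mathbf{A}\mathbf{V}$, where $\mathbf{A}=\mathbf{M}\odot\mathcal{K}(\mathbf{Q},\mathbf{K})$, $\mathbf{D}=\mathrm{diag}(\mathbf{A}\mathbf{1}_L)$, $\odot$ is the element-wise (Hadamard) product, $\mathbf{1}_L$ is the all-ones vector of length $L$, and $\mathcal{K}(\mathbf{Q},\mathbf{K})_{i,j}=\mathrm{K}(\mathbf{q}_i^{\top},\mathbf{k}_j^{\top})$ for the $i$th row $\mathbf{q}_i$ of $\mathbf{Q}$ and $j$th row $\mathbf{k}_j$ of $\mathbf{K}$. The kernel is assumed to be low-rank (linearizable) via a feature map $\phi:\mathbb{R}^{d_{QK}}\rightarrow\mathbb{R}^{m}$,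 i.e. $\mathrm{K}(\mathbf{x},\mathbf{y})=\phi(\mathbf{x})^{\top}\phi(\mathbf{y})$ (possibly only in expectation for a random feature map), so that the $i$th output is $\mathbf{r}_i=\frac{\phi(\mathbf{q}_i^{\top})^{\top}\sum_{j}\mathbf{M}_{i,j}\phi(\mathbf{k}_j^{\top})\mathbf{v}_j}{\phi(\mathbf{q}_i^{\top})^{\top}\sum_{j}\mathbf{M}_{i,j}\phi(\mathbf{k}_j^{\top})}$, with $\mathbf{v}_j$ the $j$th row of $\mathbf{V}$. *)

(* Defs.v *)
From HB Require Import structures.
From mathcomp Require Import all_boot all_order all_algebra.
From mathcomp Require Import reals.
Set Implicit Arguments. Unset Strict Implicit. Unset Printing Implicit Defensive.
Import Order.TTheory GRing.Theory Num.Theory.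
Local Open Scope ring_scope.

Section Attention.
Variables (R : realType) (L dQK m d : nat).

Definition kernel_mx (phi : 'rV[R]_dQK -> 'rV[R]_m) (Q Kk : 'M[R]_(L, dQK))
  : 'M[R]_L :=
  \matrix_(i, j) (phi (row i Q) *m (phi (row j Kk))^T) 0 0.

Definition att_A (M : 'M[R]_L) phi Q Kk : 'M[R]_L :=
  \matrix_(i, j) (M i j * kernel_mx phi Q Kk i j).

(* D^{-1} with D = diag(A 1_L); the diagonal entries are inverted
   entrywise (MathComp convention 0^-1 = 0). *)
Definition att_Dinv (M : 'M[R]_L) phi Q Kk : 'M[R]_L :=
  diag_mx (\row_i (\sum_j att_A M phi Q Kk i j)^-1).

Definition kernel_att (M : 'M[R]_L) phi Q Kk (V : 'M[R]_(L, d)) : 'M[R]_(L, d) :=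
  att_Dinv M phi Q Kk *m att_A M phi Q Kk *m V.

Definition feat (phi : 'rV[R]_dQK -> 'rV[R]_m) (X : 'M[R]_(L, dQK)) : 'M[R]_(L, m) :=
  \matrix_(i, k) phi (row i X) 0 k.
End Attention.

(* Cost model: straight-line programs over a real register file         *)
(* (nat -> R).  Each scalar arithmetic operation costs 1; a call to the *)
(* mask oracle (x |-> M x, x in R^L) costs T L.                         *)
Inductive instr (R : Type) : Type :=
  | IConst of R & nat
  | IAdd of nat & nat & nat
  | ISub of nat & nat & nat
  | IMul of nat & nat & nat
  | IDiv of nat & nat & nat
  | IMatVec of (nat -> nat) & (nat -> nat).

Section Machine.
Variables (R : realType) (L : nat).

Definition upd (s : nat -> R) (r : nat) (v : R) : nat -> R :=
  fun x => if x == r then v else s x.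

Definition mget p q (A : 'M[R]_(p, q)) (i j : nat) : R :=
  match @insub nat (fun k => k < p)%N _ i, @insub nat (fun k => k < q)%N _ j with
  | Some i', Some j' => A i' j'
  | _, _ => 0
  end.

Definition exec_instr (M : 'M[R]_L) (s : nat -> R) (ins : instr R) : nat -> R :=
  match ins with
  | IConst c r => upd s r c
  | IAdd a b r => upd s r (s a + s b)
  | ISub a b r => upd s r (s a - s b)
  | IMul a b r => upd s r (s a * s b)
  | IDiv a b r => upd s r (s a / s b)
  | IMatVec src dst =>
      let x : 'cV[R]_L := \col_k s (src (nat_of_ord k)) in
      let y : 'cV[R]_L := M *m x in
      foldl (fun s' (k : 'I_L) => upd s' (dst (nat_of_ord k)) (y k 0)) s (enum 'I_L)
  end.

Definition run (M : 'M[R]_L) (P : seq (instr R)) (s : nat -> R) : nat -> R :=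
  foldl (exec_instr M) s P.

Definition instr_cost (T : nat -> nat) (ins : instr R) : nat :=
  match ins with
  | IMatVec _ _ => T L
  | _ => 1%N
  end.

Definition prog_cost (T : nat -> nat) (P : seq (instr R)) : nat :=
  (\sum_(ins <- P) instr_cost T ins)%N.

(* Input layout: registers [0, Lm) hold phi(Q) row-major, [Lm, 2Lm)
   hold phi(K) row-major, [2Lm, 2Lm + Ld) hold V row-major, all other
   registers are 0. *)
Definition encode m d (FQ FK : 'M[R]_(L, m)) (V : 'M[R]_(L, d)) : nat -> R :=
  fun r =>
    if (r < L * m)%N then mget FQ (r %/ m) (r %% m)
    else if (r < 2 * L * m)%N then mget FK ((r - L * m) %/ m) ((r - L * m) %% m)
    else if (r < 2 * L * m + L * d)%N then
      mget V ((r - 2 * L * m) %/ d) ((r - 2 * L * m) %% d)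
    else 0.
End Machine.

(* Main.v *)
Require Import Defs.
From HB Require Import structures.
From mathcomp Require Import all_boot all_order all_algebra.
From mathcomp Require Import reals.
From mathcomp Require Import zify ring.
Import GRing.Theory Num.Theory.
Local Open Scope ring_scope.

Lemma flat_lt i j n N : (i < N)%N -> (j < n)%N -> (i * n + j < N * n)%N.
Proof. move=> hi hj; nia. Qed.
Arguments flat_lt {i j n N}.

Lemma flat_div i j n : (j < n)%N -> ((i * n + j) %/ n = i)%N.
Proof. move=> hj; rewrite divnMDl ?divn_small ?addn0 //; lia. Qed.

Lemma flat_mod i j n : (j < n)%N -> ((i * n + j) %% n = j)%N.
Proof. move=> hj; rewrite modnMDl modn_small //. Qed.

Section Prog.
Variables (R : realType) (L m d : nat).

Definition ZERO := (2 * L * m + L * d)%N.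
Definition FQr i k := (i * m + k)%N.
Definition FKr l k := (L * m + (l * m + k))%N.
Definition Vr l j := (2 * L * m + (l * d + j))%N.
Definition XB := ZERO.+1.
Definition YB := (XB + L)%N.
Definition TMP := (YB + L)%N.
Definition AB := TMP.+1.
Definition ACC i j := (AB + (i * d.+1 + j))%N.
Definition OB := (AB + L * d.+1)%N.

Fixpoint rep (f : nat -> seq (instr R)) N :=
  if N is N'.+1 then rep f N' ++ f N' else [::].

Definition xins k j l : instr R :=
  if (j < d)%N then IMul R (FKr l k) (Vr l j) (XB + l)%N
  else IAdd R (FKr l k) ZERO (XB + l)%N.
Definition accins k j i : seq (instr R) :=
  [:: IMul R (FQr i k) (YB + i)%N TMP; IAdd R (ACC i j) TMP (ACC i j)].
Definition block k j : seq (instr R) :=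
  rep (fun l => [:: xins k j l]) L ++
  IMatVec R (fun l => XB + l)%N (fun l => YB + l)%N :: rep (accins k j) L.
Definition mainP := rep (fun j => rep (fun k => block k j) m) d.+1.
Definition divins n : seq (instr R) :=
  [:: IDiv R (ACC (n %/ d) (n %% d)) (ACC (n %/ d) d) (OB + n)%N].
Definition prog := mainP ++ rep divins (L * d).

Lemma FQr_lt i k : (i < L)%N -> (k < m)%N -> (FQr i k < ZERO)%N.
Proof. move=> hi hk; have := flat_lt hi hk; rewrite /FQr /ZERO; lia. Qed.
Lemma FKr_lt i k : (i < L)%N -> (k < m)%N -> (FKr i k < ZERO)%N.
Proof. move=> hi hk; have := flat_lt hi hk; rewrite /FKr /ZERO; lia. Qed.
Lemma Vr_lt i k : (i < L)%N -> (k < d)%N -> (Vr i k < ZERO)%N.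
Proof. move=> hi hk; have := flat_lt hi hk; rewrite /Vr /ZERO; lia. Qed.
Lemma ACC_lt i k : (i < L)%N -> (k <= d)%N -> (ACC i k < OB)%N.
Proof. move=> hi hk; have := @flat_lt i k d.+1 L hi hk; rewrite /ACC /OB; lia. Qed.
Arguments FQr_lt {i k}. Arguments FKr_lt {i k}. Arguments Vr_lt {i k}. Arguments ACC_lt {i k}.
Lemma ACC_inj i j i' j' : (j <= d)%N -> (j' <= d)%N ->
  (ACC i j == ACC i' j') = (i == i') && (j == j').
Proof.
move=> hj hj'; apply/eqP/andP => [E|[/eqP-> /eqP->]] //.
have E2 : (i * d.+1 + j = i' * d.+1 + j')%N by move: E; rewrite /ACC; lia.
have := congr1 (divn^~ d.+1) E2; have := congr1 (modn^~ d.+1) E2.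
by rewrite /= !flat_mod ?flat_div // => -> ->.
Qed.

Lemma cost_cat T P1 P2 : @prog_cost R L T (P1 ++ P2) = (@prog_cost R L T P1 + @prog_cost R L T P2)%N.
Proof. by rewrite /prog_cost big_cat. Qed.
Lemma cost_rep T f N c : (forall n, @prog_cost R L T (f n) = c) ->
  @prog_cost R L T (rep f N) = (N * c)%N.
Proof.
move=> hc; elim: N => [|N IH] /=; first by rewrite /prog_cost big_nil.
by rewrite cost_cat IH hc mulSn addnC.
Qed.
Lemma cost_block T k j : @prog_cost R L T (block k j) = (L + T L + L * 2)%N.
Proof.
rewrite /block cost_cat /prog_cost big_cons -!/(@prog_cost R L T _).
rewrite (@cost_rep T _ L 1); last by move=> n; rewrite /prog_cost big_cons big_nil /xins; case: ifP.
rewrite (@cost_rep T _ L 2); last by move=> n; rewrite /prog_cost !big_cons big_nil.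
by rewrite /= muln1 addnA.
Qed.
Lemma cost_prog T : @prog_cost R L T prog = (d.+1 * (m * (L + T L + L * 2)) + L * d)%N.
Proof.
rewrite /prog cost_cat /mainP (@cost_rep T (fun j => rep (fun k => block k j) m) _ (m * (L + T L + L * 2))).
  by rewrite (@cost_rep T divins _ 1) ?muln1 // => n; rewrite /prog_cost big_cons big_nil.
by move=> j; apply: cost_rep => k; apply: cost_block.
Qed.

Variable M : 'M[R]_L.

Lemma run_cat P1 P2 s : run M (P1 ++ P2) s = run M P2 (run M P1 s).
Proof. by rewrite /run foldl_cat. Qed.
Lemma run_cons i P s : run M (i :: P) s = run M P (exec_instr M s i).
Proof. by []. Qed.
Lemma run_repS f N s : run M (rep f N.+1) s = run M (f N) (run M (rep f N) s).
Proof. by rewrite /= run_cat. Qed.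

Definition xval (s : nat -> R) k j l :=
  if (j < d)%N then s (FKr l k) * s (Vr l j) else s (FKr l k) + s ZERO.

Lemma xphaseP k j N s : (k < m)%N -> (j <= d)%N -> (N <= L)%N ->
  let s' := run M (rep (fun l => [:: xins k j l]) N) s in
  (forall r, (r < XB \/ XB + N <= r)%N -> s' r = s r) /\
  (forall l, (l < N)%N -> s' (XB + l)%N = xval s k j l).
Proof.
move=> hk hj; elim: N => [|N IH] hN /=.
  by split=> // l; rewrite ltn0.
have [IH1 IH2] := IH (ltnW hN).
rewrite run_cat /= /xins.
set s' := run M (rep _ N) s.
have P r : (r < XB)%N -> s' r = s r by move=> hr; apply: IH1; left.
case: ifP => hjd /=; rewrite /upd; split.
- move=> r hr; case: eqP => [Er|_]; first by exfalso; lia.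
  by apply: IH1; lia.
- move=> l hl; case: eqP => [El|Nl].
    have -> : l = N by lia.
    have := Vr_lt hN hjd; have := FKr_lt hN hk => hF hV.
    by rewrite /xval hjd !P // /XB; apply: ltnW.
  by apply: IH2; lia.
- move=> r hr; case: eqP => [Er|_]; first by exfalso; lia.
  by apply: IH1; lia.
- move=> l hl; case: eqP => [El|Nl].
    have -> : l = N by lia.
    have := FKr_lt hN hk => hF.
    by rewrite /xval hjd !P // /XB; apply: ltnW.
  by apply: IH2; lia.
Qed.

Lemma foldl_upd_out (f : 'I_L -> R) (es : seq 'I_L) s r :
  ~~ has (fun k : 'I_L => (YB + k)%N == r) es ->
  foldl (fun s' (k : 'I_L) => upd s' (YB + k)%N (f k)) s es r = s r.
Proof.
elim: es s => [|k es IH] s //=; rewrite negb_or => /andP[h1 h2].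
by rewrite IH // /upd eq_sym (negbTE h1).
Qed.

Lemma foldl_upd_in (f : 'I_L -> R) (es : seq 'I_L) s (i : 'I_L) :
  i \in es ->
  foldl (fun s' (k : 'I_L) => upd s' (YB + k)%N (f k)) s es (YB + i)%N = f i.
Proof.
elim: es s => [|k es IH] s //=; rewrite inE.
case: (boolP (i \in es)) => [ies _|nies]; first by apply: IH.
rewrite orbF => /eqP Eik; rewrite Eik in nies *; rewrite foldl_upd_out; first by rewrite /upd eqxx.
apply/hasPn => k' hk'; apply/negP => /eqP E.
have : k' = k by apply: val_inj; move: E => /=; lia.
move=> Ek; by rewrite -Ek hk' in nies.
Qed.

Lemma matvecP s :
  let s' := exec_instr M s (IMatVec R (fun l => XB + l)%N (fun l => YB + l)%N) in
  (forall r, (r < YB \/ YB + L <= r)%N -> s' r = s r) /\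
  (forall i : 'I_L, s' (YB + i)%N = \sum_(l < L) M i l * s (XB + l)%N).
Proof.
split.
  move=> r hr; apply: foldl_upd_out; apply/hasPn => k _; apply/negP => /eqP E.
  have := ltn_ord k; lia.
move=> i; rewrite /= foldl_upd_in ?mem_enum // mxE; apply: eq_bigr => l _; by rewrite mxE.
Qed.

Lemma accP k j N s : (k < m)%N -> (j <= d)%N -> (N <= L)%N ->
  let s' := run M (rep (accins k j) N) s in
  (forall r, (r < TMP)%N -> s' r = s r) /\
  (forall (i : 'I_L) j', (j' <= d)%N -> s' (ACC i j') = s (ACC i j') +
     (if (j' == j) && (i < N)%N then s (FQr i k) * s (YB + i)%N else 0)).
Proof.
move=> hk hj; elim: N => [|N IH] hN /=.
  by split=> // i j' _; rewrite andbF addr0.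
have [IH1 IH2] := IH (ltnW hN).
rewrite run_cat /=.
rewrite /upd; split.
  move=> r hr; case: eqP => [Er|_]; first by exfalso; move: Er hr; rewrite /ACC /AB; lia.
  by case: eqP => [Er|_]; [exfalso; lia| apply: IH1].
move=> i j' hj'; rewrite ACC_inj //.
have hFQ : (FQr N k < TMP)%N.
  have := FQr_lt hN hk; rewrite /TMP /YB /XB; lia.
have hYB : (YB + N < TMP)%N by rewrite /TMP; lia.
have hAT : (ACC i j' == TMP) = false by apply/negbTE; rewrite /ACC /AB; lia.
have hAT' : (ACC N j == TMP) = false by apply/negbTE; rewrite /ACC /AB; lia.
case: eqP => [Ei|Ni] /=.
  rewrite eq_sym; case: eqP => [Ej|Nj] /=.
    have AE : ACC N j = ACC i j by rewrite Ei.
    rewrite hAT' eqxx AE IH2 // eqxx Ei ltnn ltnSn /= addr0 -Ej !IH1 //.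
  rewrite hAT IH2 //; case: eqP => //=; by move=> /esym.
rewrite hAT IH2 //; congr (_ + _).
have -> : (i < N.+1)%N = (i < N)%N by apply/idP/idP; lia.
by [].
Qed.

Definition term (s : nat -> R) k j (i : 'I_L) :=
  s (FQr i k) * \sum_(l < L) M i l * xval s k j l.

Lemma blockP k j s : (k < m)%N -> (j <= d)%N ->
  let s' := run M (block k j) s in
  (forall r, (r < XB)%N -> s' r = s r) /\
  (forall (i : 'I_L) j', (j' <= d)%N ->
     s' (ACC i j') = s (ACC i j') + (if j' == j then term s k j i else 0)).
Proof.
move=> hk hj; rewrite /block run_cat run_cons.
have [X1 X2] := xphaseP k j L s hk hj (leqnn L).
have [Y1 Y2] := matvecP (run M (rep (fun l => [:: xins k j l]) L) s).
have [A1 A2] := accP k j L (exec_instr M (run M (rep (fun l => [:: xins k j l]) L) s) (IMatVec R (fun l => XB + l)%N (fun l => YB + l)%N)) hk hj (leqnn L).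
split.
  move=> r hr; rewrite A1; last by move: hr; rewrite /TMP /YB; lia.
  rewrite Y1; last by left; move: hr; rewrite /YB; lia.
  by apply: X1; left.
move=> i j' hj'; rewrite A2 // ltn_ord andbT.
have hA1 : exec_instr M (run M (rep (fun l => [:: xins k j l]) L) s) (IMatVec R (fun l => XB + l)%N (fun l => YB + l)%N) (ACC i j') = s (ACC i j').
  rewrite Y1; last by right; rewrite /ACC /AB /TMP; lia.
  by apply: X1; right; rewrite /ACC /AB /TMP /YB; lia.
rewrite hA1; case: eqP => // ->.
congr (_ + _); rewrite /term Y2 Y1; last by left; have := FQr_lt (ltn_ord i) hk; rewrite /YB /XB; lia.
rewrite X1; last by left; have := FQr_lt (ltn_ord i) hk; rewrite /XB; lia.
by congr (_ * _); apply: eq_bigr => l _; rewrite X2.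
Qed.

Lemma term_ext s s' k j i : (k < m)%N -> (j <= d)%N ->
  (forall r, (r < XB)%N -> s' r = s r) -> term s' k j i = term s k j i.
Proof.
move=> hk hj E; have hX r : (r < ZERO)%N -> s' r = s r by move=> h; apply: E; rewrite /XB; lia.
rewrite /term hX ?FQr_lt //; congr (_ * _); apply: eq_bigr => l _; congr (_ * _).
rewrite /xval; case: ifP => hjd; first by rewrite !hX ?FKr_lt ?Vr_lt.
by rewrite hX ?FKr_lt // E.
Qed.

Lemma innerP j K s : (j <= d)%N -> (K <= m)%N ->
  let s' := run M (rep (fun k => block k j) K) s in
  (forall r, (r < XB)%N -> s' r = s r) /\
  (forall (i : 'I_L) j', (j' <= d)%N ->
     s' (ACC i j') = s (ACC i j') +
       (if j' == j then \sum_(k < K) term s k j i else 0)).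
Proof.
move=> hj; elim: K => [|K IH] hK /=.
  by split=> // i j' _; rewrite big_ord0; case: eqP; rewrite addr0.
have [I1 I2] := IH (ltnW hK).
rewrite run_cat.
have [B1 B2] := blockP K j (run M (rep (fun k => block k j) K) s) hK hj.
split; first by move=> r hr; rewrite B1 // I1.
move=> i j' hj'; rewrite B2 // I2 // big_ord_recr /= (term_ext _ _ _ _ _ hK hj I1).
by case: eqP; rewrite ?addr0 ?addrA.
Qed.

Lemma outerP J s : (J <= d.+1)%N ->
  let s' := run M (rep (fun j => rep (fun k => block k j) m) J) s in
  (forall r, (r < XB)%N -> s' r = s r) /\
  (forall (i : 'I_L) j', (j' <= d)%N ->
     s' (ACC i j') = s (ACC i j') +
       (if (j' < J)%N then \sum_(k < m) term s k j' i else 0)).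
Proof.
elim: J => [|J IH] hJ /=.
  by split=> // i j' _; rewrite addr0.
have [I1 I2] := IH (ltnW hJ).
rewrite run_cat.
have [B1 B2] := innerP J m (run M (rep (fun j => rep (fun k => block k j) m) J) s) hJ (leqnn m).
split; first by move=> r hr; rewrite B1 // I1.
move=> i j' hj'; rewrite B2 // I2 //.
have Es : \sum_(k < m) term (run M (rep (fun j => rep (fun k => block k j) m) J) s) k J i
        = \sum_(k < m) term s k J i.
  by apply: eq_bigr => k _; apply: term_ext => //.
case: (ltngtP j' J) => h.
- by rewrite ltnS (ltnW h) addr0.
- by rewrite ltnS leqNgt h /= !addr0.
- by rewrite Es -h ltnSn addr0.
Qed.

Lemma divP N s : (N <= L * d)%N ->
  let s' := run M (rep divins N) s in
  (forall r, (r < OB)%N -> s' r = s r) /\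
  (forall n, (n < N)%N -> s' (OB + n)%N =
     s (ACC (n %/ d) (n %% d)) / s (ACC (n %/ d) d)).
Proof.
elim: N => [|N IH] hN /=; first by split=> // n; rewrite ltn0.
have [D1 D2] := IH (ltnW hN).
rewrite run_cat /= /upd.
have hd : (0 < d)%N by rewrite lt0n; apply/eqP => d0; move: hN; rewrite d0 muln0.
have hq : (N %/ d < L)%N by rewrite ltn_divLR.
have hr : (N %% d <= d)%N by apply: ltnW; rewrite ltn_pmod.
split.
  by move=> r hr'; case: eqP => [E|_]; [exfalso; lia | apply: D1].
move=> n hn; case: eqP => [E|NE].
  have -> : n = N by lia.
  by rewrite !D1 // ACC_lt.
by apply: D2; lia.
Qed.

Lemma mgetE p q (A : 'M[R]_(p, q)) (i : 'I_p) (j : 'I_q) : mget A i j = A i j.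
Proof.
rewrite /mget (insubT (fun k => k < p)%N (ltn_ord i)) (insubT (fun k => k < q)%N (ltn_ord j)).
by congr (A _ _); apply: val_inj.
Qed.

Section Enc.
Variables (FQ FK : 'M[R]_(L, m)) (V : 'M[R]_(L, d)).
Lemma encode_FQ (i : 'I_L) (k : 'I_m) : encode FQ FK V (FQr i k) = FQ i k.
Proof.
have h := flat_lt (ltn_ord i) (ltn_ord k).
by rewrite /encode /FQr h flat_div // flat_mod // mgetE.
Qed.
Lemma encode_FK (i : 'I_L) (k : 'I_m) : encode FQ FK V (FKr i k) = FK i k.
Proof.
have h := flat_lt (ltn_ord i) (ltn_ord k).
rewrite /encode /FKr.
have -> : (L * m + (i * m + k) < L * m)%N = false by apply/negbTE; lia.
have -> : (L * m + (i * m + k) < 2 * L * m)%N = true by apply/idP; lia.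
by rewrite addKn flat_div // flat_mod // mgetE.
Qed.
Lemma encode_V (i : 'I_L) (k : 'I_d) : encode FQ FK V (Vr i k) = V i k.
Proof.
have h := flat_lt (ltn_ord i) (ltn_ord k).
rewrite /encode /Vr.
have -> : (2 * L * m + (i * d + k) < L * m)%N = false by apply/negbTE; lia.
have -> : (2 * L * m + (i * d + k) < 2 * L * m)%N = false by apply/negbTE; lia.
have -> : (2 * L * m + (i * d + k) < 2 * L * m + L * d)%N = true by apply/idP; lia.
by rewrite addKn flat_div // flat_mod // mgetE.
Qed.
Lemma encode_hi r : (ZERO <= r)%N -> encode FQ FK V r = 0.
Proof.
rewrite /ZERO => h; rewrite /encode.
have -> : (r < L * m)%N = false by apply/negbTE; lia.
have -> : (r < 2 * L * m)%N = false by apply/negbTE; lia.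
by have -> : (r < 2 * L * m + L * d)%N = false by apply/negbTE; lia.
Qed.
End Enc.

End Prog.

Theorem lemma3p1 (R : realType) :
  exists C : nat,
  forall (L dQK m d : nat) (T : nat -> nat),
    (0 < m)%N -> (0 < d)%N ->
    exists (P : seq (instr R)) (out : 'I_L -> 'I_d -> nat),
      (prog_cost L T P <= C * ((T L + L) * m * d))%N /\
      forall (M : 'M[R]_L) (phi : 'rV[R]_dQK -> 'rV[R]_m)
             (Q Kk : 'M[R]_(L, dQK)) (V : 'M[R]_(L, d)) (i : 'I_L) (j : 'I_d),
        run M P (encode (feat phi Q) (feat phi Kk) V) (out i j)
        = kernel_att M phi Q Kk V i j.
Proof.
exists 7%N => L dQK m d T hm hd.
exists (prog R L m d), (fun i j => (OB L m d + (i * d + j))%N); split.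
  rewrite cost_prog; move: (T L) => t; nia.
move=> M phi Q Kk V i j.
set s0 := encode _ _ _.
have [O1 O2] := @outerP R L m d M (d.+1) s0 (leqnn _).
have [D1 D2] := @divP R L m d M (L * d) (run M (mainP R L m d) s0) (leqnn _).
rewrite /prog run_cat D2; last exact: flat_lt (ltn_ord i) (ltn_ord j).
rewrite flat_div // flat_mod // /mainP.
rewrite (O2 i j) ?(ltnW (ltn_ord j)) // (O2 i d) // ltnSn ltnS (ltnW (ltn_ord j)).
rewrite /s0 !encode_hi ?add0r; try by rewrite /ACC /AB /TMP /YB /XB; lia.
have EN (k : 'I_m) : term R L m d M s0 k j i =
    \sum_(l < L) feat phi Q i k * (M i l * (feat phi Kk l k * V l j)).
  rewrite /term /xval ltn_ord /s0 encode_FQ big_distrr; apply: eq_bigr => l _.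
  by rewrite encode_FK encode_V.
have ED (k : 'I_m) : term R L m d M s0 k d i =
    \sum_(l < L) feat phi Q i k * (M i l * feat phi Kk l k).
  rewrite /term /xval ltnn /s0 encode_FQ big_distrr; apply: eq_bigr => l _.
  by rewrite encode_FK encode_hi ?addr0.
rewrite -/s0.
rewrite (eq_bigr _ (fun k _ => EN k)) (eq_bigr _ (fun k _ => ED k)).
rewrite exchange_big /= [X in _ / X]exchange_big /=.
rewrite /kernel_att mxE /att_Dinv mul_diag_mx.
have -> : \sum_j0 (\matrix_(i0, j1) ((\row_i1 (\sum_j2 att_A M phi Q Kk i1 j2)^-1) 0 i0 * att_A M phi Q Kk i0 j1)) i j0 * V j0 j
  = \sum_(l < L) (\sum_j2 att_A M phi Q Kk i j2)^-1 * (att_A M phi Q Kk i l * V l j).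
  by apply: eq_bigr => l _; rewrite !mxE -mulrA.
rewrite -big_distrr /= mulrC; congr (_ * _).
  congr (_^-1); apply: eq_bigr => l _; rewrite !mxE big_distrr /=; apply: eq_bigr => k _.
  by rewrite !mxE mulrCA.
apply: eq_bigr => l _; rewrite !mxE big_distrr big_distrl /=; apply: eq_bigr => k _.
by rewrite !mxE mulrCA !mulrA.
Qed.
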